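(* Let $(g,f)$ be a Riordan matrix with $A$-sequence $(a_j)_{j\ge0}$, $A(t)=\sum_{j\ge0}a_jt^j$. Let $c_j=[t^j]\,1/A(t)$ for $j\ge0$, and put $\tilde c_0=\tilde c_1=0$ and $\tilde c_j=c_{j-2}$ for $j\ge2$. Then a sequence $(b_j)_{j\ge0}$ is a type-I $B$-sequence of $(g,f)$ if and only if $a_0=1$, $a_2=0$, for every $\ell\ge0$ $$b_\ell=a_{2\ell+1}-\sum_{\mathbf i=(i_1,\dots,i_k)\in\mathcal D_{2\ell,\ell-1}} b_k\,\tilde c_{i_1}\tilde c_{i_2}\cdots\tilde c_{i_k},$$ and for every $\ell\ge2$ $$a_{2\ell}=\sum_{\mathbf i=(i_1,\dots,i_k)\in\mathcal D_{2\ell-1,\ell-1}} b_k\,\tilde c_{i_1}\tilde c_{i_2}\cdots\tilde c_{i_k}.$$ (The right-hand side of the formula for $b_\ell$ involves only $b_k$ with $k\le\ell-1$, so the $b_\ell$ are determined recursively from the $a_j$, with $a_{2\ell+1}$ arbitrary; e.g. $b_0=a_1$, $b_1=a_3$, $a_4=-a_1a_3$, $b_2=a_5-b_1(a_1^2-a_2)$.)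
   Context: Let $K$ be $\mathbb{R}$ or $\mathbb{C}$. A (proper) Riordan matrix is a pair $(g,f)$ of formal power series in $K[[t]]$ with $g(0)=1$, $f(0)=0$, $f'(0)\neq 0$, identified with the infinite lower triangular matrix $(d_{n,k})_{n,k\ge0}$, $d_{n,k}=[t^n]g(t)f(t)^k$; we set $d_{n,k}=0$ if $n<0$, $k<0$ or $k>n$. The $A$-sequence $(a_j)_{j\ge0}$ is the unique sequence whose generating function $A(t)$ satisfies $f(t)=tA(f(t))$ (so $a_0\neq0$). A type-I $B$-sequence of $(g,f)$ is a sequence $(b_j)_{j\ge0}$ such that $d_{n+1,k}=d_{n,k-1}+\sum_{j\ge0}b_j d_{n-j,k+j}$ for all $n\ge0$ and $k\ge1$. For integers $n\ge1$ and $m\ge1$, $\mathcal D_{n,m}$ denotes the set of compositions of $n$ into at most $m$ parts, i.e. tuples $(i_1,\dots,i_k)$ of positive integers with $1\le k\le m$ and $i_1+\cdots+i_k=n$; $k$ is the length of the tuple. By convention $\mathcal D_{0,-1}=\mathcal D_{2,0}=\emptyset$ (empty sums are $0$). *)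

(* Defs.v *)
From mathcomp Require Import all_boot all_order all_algebra.
Set Implicit Arguments. Unset Strict Implicit. Unset Printing Implicit Defensive.
Import Order.TTheory GRing.Theory Num.Theory.
Local Open Scope ring_scope.

(* Formal power series over K represented by their coefficient sequences
   nat -> K  (s n = [t^n] s). *)
Section FPS.
Variable K : fieldType.

Definition smul (s u : nat -> K) : nat -> K :=
  fun n => \sum_(i < n.+1) s i * u (n - i)%N.

Definition sone : nat -> K := fun n => (n == 0%N)%:R.

Fixpoint spow (s : nat -> K) (k : nat) : nat -> K :=
  match k with 0%N => sone | k'.+1 => smul s (spow s k') end.

Definition rentry (g f : nat -> K) (n k : nat) : K :=
  if (k <= n)%N then smul g (spow f k) n else 0.

Definition riordan (g f : nat -> K) : Prop :=
  g 0%N = 1 /\ f 0%N = 0 /\ f 1%N != 0.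

(* [t^m] A(f(t)) = sum_j a_j [t^m] f^j  (finite since f(0) = 0) *)
Definition scomp (a f : nat -> K) : nat -> K :=
  fun m => \sum_(j < m.+1) a j * spow f j m.

(* a is the A-sequence of f :  f(t) = t A(f(t)) *)
Definition is_Aseq (f a : nat -> K) : Prop :=
  forall n, f n = if n is n'.+1 then scomp a f n' else 0.

Definition is_recip (a c : nat -> K) : Prop :=
  forall n, smul a c n = sone n.

(* type-I B-sequence: d_{n+1,k} = d_{n,k-1} + sum_{j>=0} b_j d_{n-j,k+j},
   n >= 0, k >= 1; terms with j > n vanish since n - j < 0. *)
Definition is_typeI_B (g f b : nat -> K) : Prop :=
  forall n k, (1 <= k)%N ->
    rentry g f n.+1 k =
    rentry g f n k.-1 + \sum_(j < n.+1) b j * rentry g f (n - j)%N (k + j)%N.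

Definition cshift (c : nat -> K) : nat -> K :=
  fun j => if (2 <= j)%N then c (j - 2)%N else 0.

(* sum over compositions (i_1,...,i_k) of n into at most m parts
   (1 <= k <= m) of  w_k * ct_{i_1} ... ct_{i_k}.  Each part lies in
   {1..n}, hence is encoded in 'I_n.+1. *)
Definition compsum (w ct : nat -> K) (n m : nat) : K :=
  \sum_(1 <= k < m.+1)
     \sum_(s : {ffun 'I_k -> 'I_n.+1} |
             [forall i, (0 < s i)%N] && ((\sum_(i < k) (s i : nat))%N == n))
        w k * \prod_(i < k) ct (s i : nat).

End FPS.

(* Main.v *)
Require Import Defs.
From mathcomp Require Import all_boot all_order all_algebra.
From mathcomp Require Import zify ring.
Import Order.TTheory GRing.Theory Num.Theory.
Set Implicit Arguments. Unset Strict Implicit.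
Local Open Scope ring_scope.


Definition eqt (K : fieldType) (N : nat) (p q : {poly K}) :=
  forall i, (i < N)%N -> p`_i = q`_i.
Arguments eqt {K}.

Lemma eqt_refl (K : fieldType) N (p : {poly K}) : eqt N p p.
Proof. by []. Qed.

Lemma eqt_sym (K : fieldType) N (p q : {poly K}) : eqt N p q -> eqt N q p.
Proof. by move=> h i hi; rewrite h. Qed.

Lemma eqt_trans (K : fieldType) N (p q r : {poly K}) :
  eqt N p q -> eqt N q r -> eqt N p r.
Proof. by move=> h1 h2 i hi; rewrite h1 // h2. Qed.

Lemma eqt_add (K : fieldType) N (p q p' q' : {poly K}) :
  eqt N p p' -> eqt N q q' -> eqt N (p + q) (p' + q').
Proof. by move=> h1 h2 i hi; rewrite !coefD h1 // h2. Qed.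

Lemma eqt_opp (K : fieldType) N (p p' : {poly K}) :
  eqt N p p' -> eqt N (- p) (- p').
Proof. by move=> h1 i hi; rewrite !coefN h1. Qed.

Lemma eqt_sub (K : fieldType) N (p q p' q' : {poly K}) :
  eqt N p p' -> eqt N q q' -> eqt N (p - q) (p' - q').
Proof. by move=> h1 h2; apply: eqt_add => //; apply: eqt_opp. Qed.

Lemma eqt_mul (K : fieldType) N (p q p' q' : {poly K}) :
  eqt N p p' -> eqt N q q' -> eqt N (p * q) (p' * q').
Proof.
move=> h1 h2 i hi; rewrite !coefM; apply: eq_bigr => j _.
rewrite h1 ?h2 //; [lia | have := ltn_ord j; lia].
Qed.

Lemma eqt_exp (K : fieldType) N (p p' : {poly K}) k :
  eqt N p p' -> eqt N (p ^+ k) (p' ^+ k).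
Proof.
move=> h; elim: k => [|k IH]; first by rewrite !expr0.
by rewrite !exprS; apply: eqt_mul.
Qed.

Lemma eqt_sum (K : fieldType) N (I : finType) (F G : I -> {poly K}) :
  (forall i, eqt N (F i) (G i)) -> eqt N (\sum_i F i) (\sum_i G i).
Proof.
move=> h j hj; rewrite !coef_sum; apply: eq_bigr => i _; exact: h.
Qed.

Lemma eqt_sub0 (K : fieldType) N (p q : {poly K}) :
  eqt N (p - q) 0 -> eqt N p q.
Proof. by move=> h i hi; have := h i hi; rewrite coefB coef0 => /eqP; rewrite subr_eq0 => /eqP. Qed.

Lemma eqt_0sub (K : fieldType) N (p q : {poly K}) :
  eqt N p q -> eqt N (p - q) 0.
Proof. by move=> h i hi; rewrite coefB coef0 h // subrr. Qed.

Lemma pow_low (K : fieldType) (F : {poly K}) i m :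
  F`_0 = 0 -> (m < i)%N -> (F ^+ i)`_m = 0.
Proof.
move=> F0; elim: i m => [|i IH] m //; move=> hm.
rewrite exprS coefM big1 // => j _.
case: (nat_of_ord j) (ltn_ord j) => [|j'] hj; first by rewrite F0 mul0r.
rewrite IH ?mulr0 //; lia.
Qed.

Lemma eqt_comp (K : fieldType) N (p p' F : {poly K}) :
  F`_0 = 0 -> eqt N p p' -> eqt N (p \Po F) (p' \Po F).
Proof.
move=> F0 h; apply: eqt_sub0; rewrite -comp_polyB => m hm.
rewrite coef_comp_poly coef0 big1 // => i _.
case: (ltnP i N) => hi.
  by rewrite coefB h // subrr mul0r.
by rewrite pow_low ?mulr0 //; lia.
Qed.

Lemma eqt_cancel (K : fieldType) N (G P : {poly K}) :
  G`_0 != 0 -> eqt N (G * P) 0 -> eqt N P 0.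
Proof.
move=> G0; elim: N => [|N IH] h i hi //.
have IH' : eqt N P 0 by apply: IH => j hj; apply: h; lia.
case: (ltnP i N) => hiN; first exact: IH'.
have -> : i = N by lia.
have := h N (ltnSn N); rewrite coefM big_ord_recl /= subn0 big1 ?addr0.
  by rewrite coef0 => /eqP; rewrite mulf_eq0 (negbTE G0) /= => /eqP ->.
move=> j _; rewrite IH' ?coef0 ?mulr0 //; rewrite /bump add1n; have := ltn_ord j; lia.
Qed.

Lemma eqt_Xcancel (K : fieldType) N (P : {poly K}) :
  eqt N.+1 ('X * P) 0 -> eqt N P 0.
Proof.
move=> h i hi; have := h i.+1; rewrite coefXM /= !coef0; apply; lia.
Qed.

Lemma sum_single (K : fieldType) n (F : nat -> K) j :
  (forall i, i != j -> F i = 0) ->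
  \sum_(i < n) F i = if (j < n)%N then F j else 0.
Proof.
move=> h; elim: n => [|n IH]; first by rewrite big_ord0.
rewrite big_ord_recr /= IH.
case: (ltngtP j n) => [hj|hj|hj].
- rewrite ifT ?(h n) ?addr0 //; try lia; apply/eqP; lia.
- rewrite ifF ?(h n) ?addr0 //; try lia; apply/eqP; lia.
- by subst; rewrite add0r ltnSn.
Qed.

Lemma pow_diag (K : fieldType) (F : {poly K}) n :
  F`_0 = 0 -> (F ^+ n)`_n = F`_1 ^+ n.
Proof.
move=> F0; elim: n => [|n IH]; first by rewrite !expr0 coef1.
rewrite exprSr coefM (@sum_single _ _ (fun i => (F ^+ n)`_i * F`_(n.+1 - i)) n).
  by rewrite ifT; [rewrite IH subSn // subnn exprSr | lia].
move=> i hi; case: (ltnP i n) => h.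
  by rewrite pow_low ?mul0r.
have -> : (n.+1 - i = 0)%N by lia.
by rewrite F0 mulr0.
Qed.

Lemma eqt_compcancel (K : fieldType) N (D F : {poly K}) :
  F`_0 = 0 -> F`_1 != 0 -> eqt N (D \Po F) 0 -> eqt N D 0.
Proof.
move=> F0 F1; elim: N => [|N IH] h i hi //.
have IH' : eqt N D 0 by apply: IH => j hj; apply: h; lia.
case: (ltnP i N) => hiN; first exact: IH'.
have -> : i = N by lia.
have := h N (ltnSn N); rewrite coef_comp_poly (@sum_single _ _ (fun i => D`_i * (F ^+ i)`_N) N).
  case: ifP => hs.
    by rewrite pow_diag // coef0 => /eqP; rewrite mulf_eq0 expf_eq0 (negbTE F1) andbF orbF => /eqP.
  by move=> _; rewrite coef0 nth_default // leqNgt hs.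
move=> j hj; case: (ltnP j N) => h2; first by rewrite IH' // coef0 mul0r.
by rewrite pow_low ?mulr0 //; move: hj h2; case: ltngtP.
Qed.



Definition tr (K : fieldType) (N : nat) (s : nat -> K) : {poly K} := \poly_(i < N) s i.
Arguments tr {K}.

Lemma coef_tr (K : fieldType) N (s : nat -> K) i : (i < N)%N -> (tr N s)`_i = s i.
Proof. by move=> h; rewrite coef_poly h. Qed.

Lemma rep_smul (K : fieldType) N (s u : nat -> K) (p q : {poly K}) n :
  (forall i, (i < N)%N -> p`_i = s i) -> (forall i, (i < N)%N -> q`_i = u i) ->
  (n < N)%N -> (p * q)`_n = smul s u n.
Proof.
move=> hp hq hn; rewrite coefM /smul; apply: eq_bigr => j _.
have := ltn_ord j => hj.
rewrite hp ?hq //; lia.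
Qed.

Lemma rep_spow (K : fieldType) N (f : nat -> K) (F : {poly K}) k n :
  (forall i, (i < N)%N -> F`_i = f i) -> (n < N)%N -> (F ^+ k)`_n = spow f k n.
Proof.
move=> hF; elim: k n => [|k IH] n hn /=.
  by rewrite expr0 coef1 /sone.
by rewrite exprS (rep_smul (u := spow f k) hF) // => i hi; apply: IH.
Qed.

Lemma rep_rentry (K : fieldType) N (g f : nat -> K) (G F : {poly K}) n k :
  (forall i, (i < N)%N -> G`_i = g i) -> (forall i, (i < N)%N -> F`_i = f i) ->
  F`_0 = 0 -> (n < N)%N -> rentry g f n k = (G * F ^+ k)`_n.
Proof.
move=> hG hF F0 hn; rewrite /rentry; case: leqP => hk.
  rewrite (rep_smul (u := spow f k) hG) // => i hi; exact: (rep_spow k hF hi).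
rewrite coefM big1 // => j _; rewrite pow_low ?mulr0 //.
have := ltn_ord j; lia.
Qed.

Lemma rep_scomp (K : fieldType) N (a f : nat -> K) (F : {poly K}) m :
  (forall i, (i < N)%N -> F`_i = f i) ->
  F`_0 = 0 -> (m < N)%N -> scomp a f m = (tr N a \Po F)`_m.
Proof.
move=> hF F0 hm; rewrite coef_comp_poly /scomp.
have hs : (size (tr N a) <= N)%N by apply: size_poly.
rewrite (big_ord_widen N (fun i => (tr N a)`_i * (F ^+ i)`_m) hs).
rewrite big_mkcond /=.
rewrite (big_ord_widen N (fun i => a i * spow f i m)); last lia.
rewrite [LHS]big_mkcond [RHS]big_mkcond /=; apply: eq_bigr => i _.
have hi := ltn_ord i.
case: (ltnP i (size (tr N a))) => h1; case: (ltnP i m.+1) => h2.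
- by rewrite coef_tr // (rep_spow _ hF).
- by rewrite pow_low ?mulr0.
- by rewrite -[a i](coef_tr _ hi) nth_default ?mul0r.
- by [].
Qed.



Definition Qp (K : fieldType) N (b : nat -> K) (F : {poly K}) : {poly K} :=
  'X + \sum_(j < N) (b j)%:P * ('X ^+ j.+1 * F ^+ j.+1).
Definition Sp (K : fieldType) N (b : nat -> K) (C : {poly K}) : {poly K} :=
  \sum_(k < N) (b k)%:P * ('X^2 * C) ^+ k.
Definition Dp (K : fieldType) N (A : {poly K}) (b : nat -> K) (C : {poly K}) :=
  A - 1 - 'X * Sp N b C.

Lemma key (K : fieldType) N (A C F : {poly K}) (b : nat -> K) :
  F`_0 = 0 -> eqt N F ('X * (A \Po F)) -> eqt N (A * C) 1 ->
  eqt N ('X * (Dp N A b C \Po F)) (F - Qp N b F).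
Proof.
move=> F0 h1 h2.
set W := C \Po F.
have hFC : eqt N (F * W) 'X.
  apply: (@eqt_trans _ _ _ ('X * (A \Po F) * W)); first exact: eqt_mul.
  rewrite -mulrA -comp_polyM.
  apply: (@eqt_trans _ _ _ ('X * (1 \Po F))); first exact: eqt_mul (eqt_comp F0 h2).
  by rewrite -polyC1 comp_polyC polyC1 mulr1.
rewrite /Dp /Qp /Sp !comp_polyB comp_polyM comp_polyX -polyC1 comp_polyC polyC1.
rewrite rmorph_sum /=.
have -> : 'X * ((A \Po F) - 1 - F * \sum_(i < N) (((b i)%:P * ('X^2 * C) ^+ i) \Po F))
  = ('X * (A \Po F) - 'X) - \sum_(i < N) 'X * (F * (((b i)%:P * ('X^2 * C) ^+ i) \Po F)).
  by rewrite -mulr_sumr -mulr_sumr; ring.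
have -> : F - ('X + \sum_(j < N) (b j)%:P * ('X ^+ j.+1 * F ^+ j.+1)) =
  (F - 'X) - \sum_(j < N) (b j)%:P * ('X ^+ j.+1 * F ^+ j.+1) by ring.
apply: eqt_sub; first by apply: eqt_sub; [exact: eqt_sym h1 | exact: eqt_refl].
apply: eqt_sum => k.
rewrite comp_polyM comp_polyC rmorphXn /= comp_polyM rmorphXn /= comp_polyX -/W.
have -> : 'X * (F * ((b k)%:P * (F ^+ 2 * W) ^+ k)) =
   ((b k)%:P * ('X * F * F ^+ k)) * (F * W) ^+ k.
  by rewrite !exprMn; ring.
have -> : (b k)%:P * ('X ^+ k.+1 * F ^+ k.+1) = ((b k)%:P * ('X * F * F ^+ k)) * 'X ^+ k.
  by rewrite !exprS; ring.
apply: eqt_mul; [exact: eqt_refl | exact: eqt_exp hFC].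
Qed.

Lemma Bcoef (K : fieldType) N (g f b : nat -> K) (G F : {poly K}) n k :
  (forall i, (i < N)%N -> G`_i = g i) -> (forall i, (i < N)%N -> F`_i = f i) ->
  F`_0 = 0 -> (n.+1 < N)%N -> (1 <= k)%N ->
  rentry g f n k.-1 + \sum_(j < n.+1) b j * rentry g f (n - j)%N (k + j)%N
  = (G * F ^+ k.-1 * Qp N b F)`_n.+1.
Proof.
move=> hG hF F0 hn hk.
have -> : G * F ^+ k.-1 * Qp N b F = 'X * (G * F ^+ k.-1) +
    \sum_(j < N) (b j)%:P * ('X ^+ j.+1 * (G * F ^+ (k + j))).
  rewrite /Qp mulrDr mulr_sumr; congr (_ + _); first by ring.
  apply: eq_bigr => j _.
  have -> : (k + j = k.-1 + j.+1)%N by lia.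
  by rewrite exprD; ring.
rewrite coefD coefXM /= (rep_rentry _ hG hF) //; last lia.
congr (_ + _); rewrite coef_sum.
rewrite (big_ord_widen N (fun j => b j * rentry g f (n - j) (k + j))); last lia.
rewrite big_mkcond /=; apply: eq_bigr => j _.
rewrite coefCM coefXnM; case: ifP => h.
  rewrite ifF; last lia.
  by rewrite (rep_rentry _ hG hF) ?subSS //; lia.
by rewrite ifT ?mulr0 //; lia.
Qed.



Lemma prod_const_ord (K : fieldType) (p : {poly K}) k : \prod_(i < k) p = p ^+ k.
Proof.
elim: k => [|k IH]; first by rewrite big_ord0 expr0.
by rewrite big_ord_recr /= IH exprSr.
Qed.

Lemma comb (K : fieldType) (P : {poly K}) (w : nat -> K) n k :
  P`_0 = 0 -> (forall j, (0 < j <= n)%N -> P`_j = w j) ->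
  (P ^+ k)`_n =
  \sum_(s : {ffun 'I_k -> 'I_n.+1} |
          [forall i, (0 < s i)%N] && ((\sum_(i < k) (s i : nat))%N == n))
     \prod_(i < k) w (s i).
Proof.
move=> P0 hP.
pose cc j := if (0 < j)%N then w j else 0.
set P' := \sum_(j < n.+1) (cc j)%:P * 'X^j.
have hP' : eqt n.+1 P P'.
  move=> i hi; rewrite /P' coef_sum.
  under eq_bigr => j _ do rewrite coefCM coefXn.
  rewrite (@sum_single _ _ (fun j => cc j * (i == j)%:R) i); last first.
    by move=> j hj; rewrite eq_sym (negbTE hj) mulr0.
  rewrite hi eqxx mulr1 /cc; case: i hi => [|i] hi //=.
  by apply: hP; lia.
rewrite (eqt_exp k hP') // -prod_const_ord /P' bigA_distr_bigA /= coef_sum.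
rewrite [RHS]big_mkcond /=; apply: eq_bigr => s _.
rewrite big_split /= -rmorph_prod prodrXr coefCM coefXn.
case: eqP => hs.
  rewrite mulr1 -hs eqxx andbT.
  case: forallP => hpos.
    by apply: eq_bigr => i _; rewrite /cc hpos.
  have [i hi] : exists i, ~~ (0 < s i)%N.
    by apply/forallPn/negP => /forallP.
  by rewrite (bigD1 i) //= /cc (negbTE hi) mul0r.
by rewrite mulr0 ifF //; apply/negP => /andP[_ /eqP] hh; apply: hs; rewrite hh.
Qed.

Lemma coef0_exp (K : fieldType) (p : {poly K}) k : (p ^+ k)`_0 = p`_0 ^+ k.
Proof.
elim: k => [|k IH]; first by rewrite !expr0 coef1.
by rewrite !exprS coef0M IH.
Qed.

Lemma XC_exp (K : fieldType) (C : {poly K}) k : ('X^2 * C) ^+ k = 'X^(2 * k) * C ^+ k.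
Proof. by rewrite exprMn -exprM. Qed.

Lemma t_low (K : fieldType) (C : {poly K}) k m :
  (m < 2 * k)%N -> (('X^2 * C) ^+ k)`_m = 0.
Proof. by move=> h; rewrite XC_exp coefXnM h. Qed.

Lemma t_diag (K : fieldType) (C : {poly K}) k :
  C`_0 = 1 -> (('X^2 * C) ^+ k)`_(2 * k) = 1.
Proof. by move=> h; rewrite XC_exp coefXnM ltnn subnn coef0_exp h expr1n. Qed.

Lemma t_comb (K : fieldType) N (c b : nat -> K) k m :
  (m < N.+2)%N ->
  \sum_(s : {ffun 'I_k -> 'I_m.+1} |
          [forall i, (0 < s i)%N] && ((\sum_(i < k) (s i : nat))%N == m))
     b k * \prod_(i < k) cshift c (s i)
  = b k * (('X^2 * tr N c) ^+ k)`_m.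
Proof.
move=> hm; rewrite -mulr_sumr; congr (_ * _); symmetry; apply: comb.
  by rewrite coefXnM.
move=> j hj; rewrite coefXnM /cshift.
case: ifP => h; first by rewrite ifF //; lia.
rewrite ifT; last lia.
rewrite coef_tr //; lia.
Qed.

Lemma Sp_coef (K : fieldType) N (b : nat -> K) (C : {poly K}) m :
  (Sp N b C)`_m = \sum_(0 <= k < N) b k * (('X^2 * C) ^+ k)`_m.
Proof.
rewrite /Sp coef_sum big_mkord; apply: eq_bigr => k _; by rewrite coefCM.
Qed.

Lemma compsum_t (K : fieldType) N (b c : nat -> K) m l :
  (m < N.+2)%N ->
  compsum b (cshift c) m l = \sum_(1 <= k < l.+1) b k * (('X^2 * tr N c) ^+ k)`_m.
Proof.
move=> hm; rewrite /compsum; apply: eq_big_nat => k _.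
exact: t_comb.
Qed.

Lemma Tcoef_even (K : fieldType) N (b c : nat -> K) l :
  c 0%N = 1 -> (2 * l < N)%N ->
  (Sp N b (tr N c))`_(2 * l) = b l + compsum b (cshift c) (2 * l) l.-1.
Proof.
move=> c0 hl.
have C0 : (tr N c)`_0 = 1 by rewrite coef_tr //; lia.
rewrite Sp_coef (@compsum_t _ N); last lia.
rewrite big_ltn; last lia.
case: l hl => [|l] hl.
  rewrite [X in _ = _ + X]big_geq // addr0 big_nat_cond big1 ?addr0.
    by rewrite expr0 coef1 mulr1.
  move=> k /andP[/andP[h1 h2] _]; rewrite t_low ?mulr0 //; lia.
rewrite expr0 coef1 /= mulr0 add0r /=.
rewrite (@big_cat_nat _ _ _ l.+1); try lia.
rewrite /= [LHS]addrC; congr (_ + _).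
rewrite big_ltn; last lia.
rewrite t_diag // mulr1 big_nat_cond big1 ?addr0 //.
move=> k /andP[/andP[h1 h2] _]; rewrite t_low ?mulr0 //; lia.
Qed.

Lemma Tcoef_odd (K : fieldType) N (b c : nat -> K) l :
  (1 <= l)%N -> ((2 * l).-1 < N)%N ->
  (Sp N b (tr N c))`_((2 * l).-1) = compsum b (cshift c) (2 * l).-1 l.-1.
Proof.
move=> l1 hl.
rewrite Sp_coef (@compsum_t _ N); last lia.
rewrite big_ltn; last lia.
have h0 : ((2 * l).-1 == 0)%N = false by apply/eqP; lia.
rewrite expr0 coef1 h0.
rewrite mulr0 add0r prednK //.
rewrite (@big_cat_nat _ _ _ l); try lia.
rewrite /= [X in _ + X = _]big_nat_cond [X in _ + X = _]big1 ?addr0 //.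
move=> k /andP[/andP[h1 h2] _]; rewrite t_low ?mulr0 //; lia.
Qed.



Lemma tr0 (K : fieldType) N (s : nat -> K) : s 0%N = 0 -> (tr N s)`_0 = 0.
Proof. by move=> h; rewrite coef_poly; case: ifP. Qed.

Lemma setup (K : fieldType) (g f a c b : nat -> K) N :
  riordan g f -> is_Aseq f a -> is_recip a c ->
  eqt N ('X * (Dp N (tr N a) b (tr N c) \Po tr N f)) (tr N f - Qp N b (tr N f)).
Proof.
move=> [g0 [f0 f1]] hA hR.
have F0 : (tr N f)`_0 = 0 by apply: tr0.
have hF : forall i, (i < N)%N -> (tr N f)`_i = f i by move=> i; apply: coef_tr.
apply: key => //.
  move=> i hi; rewrite coefXM hF // hA.
  case: i hi => [|i] hi //=.
  by apply: rep_scomp => //; lia.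
move=> i hi; rewrite coef1 (@rep_smul _ N a c) ?hR //.
- by move=> j; apply: coef_tr.
- by move=> j; apply: coef_tr.
Qed.

Lemma Q0 (K : fieldType) N (b : nat -> K) F : (Qp N b F)`_0 = 0.
Proof.
rewrite /Qp coefD coefX add0r coef_sum big1 // => j _.
by rewrite coefCM coefXnM mulr0.
Qed.

Lemma D_coef0 (K : fieldType) N (a b c : nat -> K) :
  (0 < N)%N -> (Dp N (tr N a) b (tr N c))`_0 = a 0%N - 1.
Proof. by move=> h; rewrite /Dp !coefB coef1 coefXM coef_tr // subr0. Qed.

Lemma D_coefS (K : fieldType) N (a b c : nat -> K) m :
  (m.+1 < N)%N -> (Dp N (tr N a) b (tr N c))`_m.+1 = a m.+1 - (Sp N b (tr N c))`_m.
Proof. by move=> h; rewrite /Dp !coefB coef1 coefXM coef_tr //= subr0. Qed.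

Lemma forward (K : fieldType) (g f a c b : nat -> K) :
  riordan g f -> is_Aseq f a -> is_recip a c -> is_typeI_B g f b ->
  forall M, (1 <= M)%N -> eqt M (Dp M.+1 (tr M.+1 a) b (tr M.+1 c)) 0.
Proof.
move=> hr hA hR hB M hM.
have [g0 [f0 f1]] := hr.
set N := M.+1.
have hG : forall i, (i < N)%N -> (tr N g)`_i = g i by move=> i; apply: coef_tr.
have hF : forall i, (i < N)%N -> (tr N f)`_i = f i by move=> i; apply: coef_tr.
have F0 : (tr N f)`_0 = 0 by apply: tr0.
have hPhi : eqt N (tr N g * (tr N f - Qp N b (tr N f))) 0.
  move=> i hi; rewrite coef0 mulrBr coefB; apply/eqP; rewrite subr_eq0; apply/eqP.
  case: i hi => [|n] hi.
    by rewrite !coef0M F0 Q0.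
  have := hB n 1%N (leqnn 1).
  rewrite (rep_rentry _ hG hF) // expr1 (Bcoef _ hG hF) // expr0 mulr1 => ->.
  by [].
have hFQ : eqt N (tr N f - Qp N b (tr N f)) 0.
  apply: eqt_cancel hPhi; rewrite coef_tr // g0; exact: oner_neq0.
have hXD : eqt N ('X * (Dp N (tr N a) b (tr N c) \Po tr N f)) 0.
  apply: eqt_trans hFQ; exact: setup.
have hD := eqt_Xcancel hXD.
apply: eqt_compcancel hD => //.
by rewrite coef_tr.
Qed.

Lemma backward (K : fieldType) (g f a c b : nat -> K) :
  riordan g f -> is_Aseq f a -> is_recip a c ->
  (forall N, eqt N (Dp N (tr N a) b (tr N c)) 0) -> is_typeI_B g f b.
Proof.
move=> hr hA hR hD n k hk.
have [g0 [f0 f1]] := hr.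
set N := n.+2.
have hG : forall i, (i < N)%N -> (tr N g)`_i = g i by move=> i; apply: coef_tr.
have hF : forall i, (i < N)%N -> (tr N f)`_i = f i by move=> i; apply: coef_tr.
have F0 : (tr N f)`_0 = 0 by apply: tr0.
have hDF : eqt N (Dp N (tr N a) b (tr N c) \Po tr N f) 0.
  by rewrite -(comp_poly0 (tr N f)); apply: eqt_comp.
have hXD : eqt N ('X * (Dp N (tr N a) b (tr N c) \Po tr N f)) 0.
  by rewrite -(mulr0 'X); apply: eqt_mul.
have hFQ : eqt N (tr N f) (Qp N b (tr N f)).
  apply: eqt_sub0; apply: eqt_trans hXD; apply: eqt_sym; exact: setup.
rewrite (rep_rentry _ hG hF) // (Bcoef _ hG hF) //.
have -> : tr N g * tr N f ^+ k = tr N g * tr N f ^+ k.-1 * tr N f.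
  by rewrite -mulrA -exprSr prednK.
exact: (eqt_mul (@eqt_refl _ N (tr N g * tr N f ^+ k.-1)) hFQ (ltnSn n.+1)).
Qed.

Lemma c0_one (K : fieldType) (a c : nat -> K) : is_recip a c -> a 0%N = 1 -> c 0%N = 1.
Proof.
move=> hR a0; have := hR 0%N; rewrite /smul big_ord1 subn0 a0 mul1r /sone eqxx => ->.
by [].
Qed.
Theorem theorem2p3 (K : numFieldType) (g f a c b : nat -> K) :
  riordan g f -> is_Aseq f a -> is_recip a c ->
  (is_typeI_B g f b <->
   [/\ a 0%N = 1, a 2%N = 0,
       (forall l : nat,
          b l = a (2 * l).+1 - compsum b (cshift c) (2 * l) l.-1)
     & (forall l : nat, (2 <= l)%N ->
          a (2 * l)%N = compsum b (cshift c) (2 * l).-1 l.-1)]).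
Proof.
move=> hr hA hR; split.
  move=> hB.
  have hD := forward hr hA hR hB.
  have a0 : a 0%N = 1.
    have := hD 1%N (leqnn 1) 0%N (ltn0Sn 0).
    by rewrite coef0 D_coef0 //; move/eqP; rewrite subr_eq0 => /eqP.
  have c0 := c0_one hR a0.
  have hDc : forall M m, (1 <= M)%N -> (m.+1 < M)%N ->
      a m.+1 = (Sp M.+1 b (tr M.+1 c))`_m.
    move=> M m hM hm; have := hD M hM m.+1 hm.
    rewrite coef0 D_coefS; last lia.
    by move/eqP; rewrite subr_eq0 => /eqP.
  split => //.
  - rewrite (@hDc 3%N 1%N) // (@Tcoef_odd _ _ _ _ 1%N) //.
    by rewrite /compsum big_geq.
  - move=> l; rewrite (@hDc (2 * l).+2 (2 * l)) // ?Tcoef_even //; try lia.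
    by rewrite addrK.
  - move=> l hl; have -> : (2 * l = ((2 * l).-1).+1)%N by lia.
    rewrite (@hDc (2 * l).+1 (2 * l).-1) //; try lia.
    by rewrite Tcoef_odd //; try lia.
move=> [a0 a2 hb ha].
have c0 := c0_one hR a0.
apply: (backward hr hA hR) => N [|m] hi.
  by rewrite coef0 D_coef0 // a0 subrr.
rewrite coef0 D_coefS //; apply/eqP; rewrite subr_eq0; apply/eqP.
have := odd_double_half m; move: (odd m) (m./2) => o h; rewrite -muln2 => hm.
case: o hm => /= hm.
  rewrite (_ : m = (2 * h.+1).-1); last lia.
  rewrite Tcoef_odd //; try lia.
  case: h hm => [|h] hm.
    by rewrite /compsum big_geq.
  by rewrite -ha.
rewrite (_ : m = 2 * h)%N; last lia.
by rewrite Tcoef_even //; try lia; rewrite (hb h) subrK.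
Qed.
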